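(* Let $(X,\rho)$ be a geodesic metric space. (i) If $X$ is an $\mathbb R$-tree, then for every point $o\in X$ there exists a unique partial order $\preceq$ on $X$ such that $(X,\rho,\preceq)$ is an upper-semilinear metric $\vee$-semilattice with root $o$. Moreover, in this order every nonempty subset $A\subset X$ has a supremum. (ii) Conversely, if $X$ admits a partial order $\preceq$ such that $(X,\rho,\preceq)$ is an upper-semilinear metric $\vee$-semilattice, then $X$ is an $\mathbb R$-tree.
   Context: A segment $[xy]$ in a metric space is the image of a map $\gamma:[\alpha,\beta]\to X$ with $\rho(\gamma(s),\gamma(t))=|s-t|$ for all $s,t$, $\gamma(\alpha)=x$, $\gamma(\beta)=y$. A metric space is geodesic if any two points are joined by a segment. A geodesic metric space $X$ is an $\mathbb R$-tree if any two points are joined by a unique segment and, for all $x,y,z\in X$, $[xy]\subset[xz]\cup[zy]$. For a partial order $\preceq$ on $X$, the pair $(X,\preceq)$ is a $\vee$-semilattice if any two points $x,y$ have a supremum $x\vee y$. The triple $(X,\rho,\preceq)$ is a metric $\vee$-semilattice if $(X,\preceq)$ is a $\vee$-semilattice and (1) for all $x,y,z$ with $x\preceq z\preceq y$ one has $\rho(x,z)+\rho(z,y)=\rho(x,y)$, and (2) for all $x,y$ one has $\rho(x,y)=\rho(x,x\vee y)+\rho(x\vee y,y)$. The order is upper-semilinear if for every $x$ the upper cone $U_x=\{y\in X: x\preceq y\}$ is linearly ordered. ''With root $o$'' means that $o$ is the greatest element of $(X,\preceq)$. *)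

(* Defs.v *)
From Stdlib Require Import Reals.
Open Scope R_scope.

Definition is_metric {X : Type} (rho : X -> X -> R) : Prop :=
  (forall x y, 0 <= rho x y) /\
  (forall x y, rho x y = 0 <-> x = y) /\
  (forall x y, rho x y = rho y x) /\
  (forall x y z, rho x z <= rho x y + rho y z).

Definition is_segment {X : Type} (rho : X -> X -> R) (x y : X) (S : X -> Prop) : Prop :=
  exists (a b : R) (gamma : R -> X),
    a <= b /\
    (forall s t, a <= s <= b -> a <= t <= b -> rho (gamma s) (gamma t) = Rabs (s - t)) /\
    gamma a = x /\ gamma b = y /\
    (forall z, S z <-> exists t, a <= t <= b /\ gamma t = z).

Definition geodesic {X : Type} (rho : X -> X -> R) : Prop :=
  forall x y, exists S, is_segment rho x y S.

Definition R_tree {X : Type} (rho : X -> X -> R) : Prop :=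
  geodesic rho /\
  (forall x y S1 S2, is_segment rho x y S1 -> is_segment rho x y S2 ->
     forall z, S1 z <-> S2 z) /\
  (forall x y z Sxy Sxz Szy,
     is_segment rho x y Sxy -> is_segment rho x z Sxz -> is_segment rho z y Szy ->
     forall w, Sxy w -> Sxz w \/ Szy w).

Definition partial_order {X : Type} (le : X -> X -> Prop) : Prop :=
  (forall x, le x x) /\
  (forall x y, le x y -> le y x -> x = y) /\
  (forall x y z, le x y -> le y z -> le x z).

Definition is_sup {X : Type} (le : X -> X -> Prop) (A : X -> Prop) (s : X) : Prop :=
  (forall a, A a -> le a s) /\
  (forall u, (forall a, A a -> le a u) -> le s u).

Definition pair_set {X : Type} (x y : X) : X -> Prop := fun z => z = x \/ z = y.

Definition join_semilattice {X : Type} (le : X -> X -> Prop) : Prop :=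
  partial_order le /\ forall x y, exists s, is_sup le (pair_set x y) s.

(* (X, rho, le) is a metric join-semilattice; x \/ y is any supremum of {x,y}
   (unique by antisymmetry). *)
Definition metric_join_semilattice {X : Type} (rho : X -> X -> R) (le : X -> X -> Prop) : Prop :=
  join_semilattice le /\
  (forall x y z, le x z -> le z y -> rho x z + rho z y = rho x y) /\
  (forall x y s, is_sup le (pair_set x y) s -> rho x y = rho x s + rho s y).

Definition upper_semilinear {X : Type} (le : X -> X -> Prop) : Prop :=
  forall x y z, le x y -> le x z -> le y z \/ le z y.

Definition has_root {X : Type} (le : X -> X -> Prop) (o : X) : Prop :=
  forall x, le x o.

Definition usl_mjs_rooted {X : Type} (rho : X -> X -> R) (le : X -> X -> Prop) (o : X) : Prop :=
  metric_join_semilattice rho le /\ upper_semilinear le /\ has_root le o.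

(* Main.v *)
Require Import Defs.
From Stdlib Require Import Reals Lra Classical.
Open Scope R_scope.

Lemma rabs_ord (s t : R) : s <= t -> Rabs (s - t) = t - s.
Proof. intros; rewrite Rabs_left1; lra. Qed.
Lemma rabs_ord' (s t : R) : s <= t -> Rabs (t - s) = t - s.
Proof. intros; rewrite Rabs_right; lra. Qed.

Lemma seg_between (X : Type) (rho : X -> X -> R) (x y w : X) (S : X -> Prop) :
  is_segment rho x y S -> S w -> rho x w + rho w y = rho x y.
Proof.
  intros (a & b & g & Hab & Hiso & Ha & Hb & HS) Hw.
  apply HS in Hw. destruct Hw as (t & Ht & <-). subst.
  rewrite !Hiso by lra. rewrite (rabs_ord a t), (rabs_ord t b), (rabs_ord a b); lra.
Qed.

Lemma seg_dist (X : Type) (rho : X -> X -> R) (x y : X) (S : X -> Prop) :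
  is_segment rho x y S -> rho x y = 
  (let _ := S in rho x y).
Proof. reflexivity. Qed.

Lemma seg_point (X : Type) (rho : X -> X -> R) (x y : X) (S : X -> Prop) (d : R) :
  is_segment rho x y S -> 0 <= d <= rho x y -> exists w, S w /\ rho x w = d.
Proof.
  intros (a & b & g & Hab & Hiso & Ha & Hb & HS) Hd. subst.
  rewrite Hiso, rabs_ord in Hd by lra.
  exists (g (a + d)). split.
  - apply HS. exists (a + d). split; [lra|auto].
  - rewrite Hiso, rabs_ord by lra. lra.
Qed.

Lemma seg_uniq_dist (X : Type) (rho : X -> X -> R) (x y w1 w2 : X) (S : X -> Prop) :
  is_segment rho x y S -> S w1 -> S w2 -> rho x w1 = rho x w2 -> w1 = w2.
Proof.
  intros (a & b & g & Hab & Hiso & Ha & Hb & HS) H1 H2 Hd. subst.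
  apply HS in H1; apply HS in H2.
  destruct H1 as (t1 & Ht1 & <-); destruct H2 as (t2 & Ht2 & <-).
  rewrite !Hiso, !rabs_ord in Hd by lra.
  replace t2 with t1 by lra. reflexivity.
Qed.

Lemma rho0 (X : Type) (rho : X -> X -> R) x y : is_metric rho -> rho x y = 0 -> x = y.
Proof. intros (_ & H & _) E. apply H, E. Qed.
Lemma rhoxx (X : Type) (rho : X -> X -> R) x : is_metric rho -> rho x x = 0.
Proof. intros (_ & H & _). apply H; reflexivity. Qed.

Definition Mset {X : Type} (rho : X -> X -> R) x y z := rho x z + rho z y = rho x y.

Ltac mdestr Hm := let Hp := fresh "Hp" in let Hz := fresh "Hz" in
  let Hs := fresh "Hs" in let Ht := fresh "Ht" in
  destruct Hm as (Hp & Hz & Hs & Ht).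

Lemma chainM (X : Type) (rho : X -> X -> R) le x y z s :
  is_metric rho -> metric_join_semilattice rho le ->
  is_sup le (pair_set x y) s -> le x z -> le z s -> Mset rho x y z.
Proof.
  intros Hm ((Hpo & Hj) & H1 & H2) Hsup Hxz Hzs. mdestr Hm.
  pose proof (H1 x s z Hxz Hzs). pose proof (H2 _ _ _ Hsup).
  pose proof (Ht z s y). pose proof (Ht x z y). unfold Mset. lra.
Qed.

Lemma chainM' (X : Type) (rho : X -> X -> R) le x y z s :
  is_metric rho -> metric_join_semilattice rho le ->
  is_sup le (pair_set x y) s -> le y z -> le z s -> Mset rho x y z.
Proof.
  intros Hm ((Hpo & Hj) & H1 & H2) Hsup Hxz Hzs. mdestr Hm.
  pose proof (H1 y s z Hxz Hzs). pose proof (H2 _ _ _ Hsup).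
  pose proof (Ht x s z). pose proof (Ht x z y). pose proof (Hs s z).
  pose proof (Hs s y). pose proof (Hs z y). unfold Mset. lra.
Qed.

Lemma sup_l {X} (le : X -> X -> Prop) x y s : is_sup le (pair_set x y) s -> le x s.
Proof. intros [H _]. apply H. left; auto. Qed.
Lemma sup_r {X} (le : X -> X -> Prop) x y s : is_sup le (pair_set x y) s -> le y s.
Proof. intros [H _]. apply H. right; auto. Qed.
Lemma sup_least {X} (le : X -> X -> Prop) x y s u :
  is_sup le (pair_set x y) s -> le x u -> le y u -> le s u.
Proof. intros [_ H] Hx Hy. apply H. intros a [->| ->]; auto. Qed.

Lemma Mchain (X : Type) (rho : X -> X -> R) le x y z s :
  is_metric rho -> metric_join_semilattice rho le -> upper_semilinear le ->
  is_sup le (pair_set x y) s -> Mset rho x y z -> (le x z \/ le y z) /\ le z s.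
Proof.
  intros Hm Hmj Husl Hsup HM.
  pose proof Hmj as ((Hpo & Hj) & H1 & H2). destruct Hpo as (Hrefl & Hanti & Htr).
  pose proof Hm as Hm'. mdestr Hm'. unfold Mset in HM.
  assert (Hor : le x z \/ le y z).
  { destruct (Hj x z) as [p Hp']. destruct (Hj z y) as [q Hq].
    pose proof (sup_l _ _ _ _ Hp'). pose proof (sup_r _ _ _ _ Hp').
    pose proof (sup_l _ _ _ _ Hq). pose proof (sup_r _ _ _ _ Hq).
    destruct (Husl z p q) as [Hpq|Hqp]; auto.
    - left. pose proof (H2 _ _ _ Hp'). pose proof (H2 _ _ _ Hq).
      pose proof (H1 z q p ltac:(auto) Hpq).
      pose proof (Ht x p y). pose proof (Ht p q y). pose proof (Hs p z).
      pose proof (Hp p z).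
      assert (E0 : rho p z = 0) by lra. apply (rho0 _ rho) in E0; auto. subst; auto.
    - right. pose proof (H2 _ _ _ Hp'). pose proof (H2 _ _ _ Hq).
      pose proof (H1 z p q ltac:(auto) Hqp).
      pose proof (Ht x q y). pose proof (Ht x p q). pose proof (Hs q z).
      pose proof (Hp q z). pose proof (Hs q p). pose proof (Hs p z).
      assert (E0 : rho q z = 0) by lra. apply (rho0 _ rho) in E0; auto. subst; auto. }
  split; auto.
  pose proof (sup_l _ _ _ _ Hsup). pose proof (sup_r _ _ _ _ Hsup).
  pose proof (H2 _ _ _ Hsup).
  destruct Hor as [Hxz|Hyz].
  - destruct (Husl x z s Hxz H) as [|Hsz]; auto.
    pose proof (H1 x z s H Hsz). pose proof (H1 y z s H0 Hsz).
    pose proof (Hs s z). pose proof (Hs s y). pose proof (Hs z y). pose proof (Hp s z).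
    assert (E0 : rho s z = 0) by lra. apply (rho0 _ rho) in E0; auto. subst; auto.
  - destruct (Husl y z s Hyz H0) as [|Hsz]; auto.
    pose proof (H1 x z s H Hsz). pose proof (H1 y z s H0 Hsz).
    pose proof (Hs s z). pose proof (Hs s y). pose proof (Hs z y). pose proof (Hp s z).
    assert (E0 : rho s z = 0) by lra. apply (rho0 _ rho) in E0; auto. subst; auto.
Qed.

Lemma M_eq (X : Type) (rho : X -> X -> R) le x y z w s :
  is_metric rho -> metric_join_semilattice rho le -> upper_semilinear le ->
  is_sup le (pair_set x y) s -> Mset rho x y z -> Mset rho x y w ->
  rho x z = rho x w -> z = w.
Proof.
  intros Hm Hmj Husl Hsup Hz Hw E.
  destruct (Mchain _ _ _ _ _ _ _ Hm Hmj Husl Hsup Hz) as [[Hxz|Hyz] Hzs];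
  destruct (Mchain _ _ _ _ _ _ _ Hm Hmj Husl Hsup Hw) as [[Hxw|Hyw] Hws];
  pose proof Hmj as ((Hpo & Hj) & H1 & H2);
  pose proof Hm as Hm'; mdestr Hm'; unfold Mset in *;
  pose proof (sup_l _ _ _ _ Hsup); pose proof (sup_r _ _ _ _ Hsup);
  pose proof (H2 _ _ _ Hsup).
  - destruct (Husl x z w Hxz Hxw) as [Hc|Hc].
    + pose proof (H1 _ _ _ Hxz Hc). pose proof (Hp z w).
      apply (rho0 _ rho); auto; lra.
    + pose proof (H1 _ _ _ Hxw Hc). pose proof (Hp w z). pose proof (Hs w z).
      apply (rho0 _ rho); auto; lra.
  - pose proof (H1 x s z Hxz Hzs). pose proof (H1 y s w Hyw Hws).
    pose proof (Hp z s). pose proof (Hp w s). pose proof (Hs w y). pose proof (Hs s y).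
    assert (E1 : rho z s = 0) by lra. assert (E2 : rho w s = 0) by lra.
    apply (rho0 _ rho) in E1; auto. apply (rho0 _ rho) in E2; auto. congruence.
  - pose proof (H1 y s z Hyz Hzs). pose proof (H1 x s w Hxw Hws).
    pose proof (Hp z s). pose proof (Hp w s). pose proof (Hs z y). pose proof (Hs s y).
    assert (E1 : rho z s = 0) by lra. assert (E2 : rho w s = 0) by lra.
    apply (rho0 _ rho) in E1; auto. apply (rho0 _ rho) in E2; auto. congruence.
  - pose proof (Hs z y). pose proof (Hs w y).
    destruct (Husl y z w Hyz Hyw) as [Hc|Hc].
    + pose proof (H1 _ _ _ Hyz Hc). pose proof (Hp z w).
      apply (rho0 _ rho); auto; lra.
    + pose proof (H1 _ _ _ Hyw Hc). pose proof (Hp w z). pose proof (Hs w z).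
      apply (rho0 _ rho); auto; lra.
Qed.

Lemma M_seg (X : Type) (rho : X -> X -> R) le x y z S :
  is_metric rho -> metric_join_semilattice rho le -> upper_semilinear le ->
  is_segment rho x y S -> Mset rho x y z -> S z.
Proof.
  intros Hm Hmj Husl HS Hz.
  pose proof Hmj as ((Hpo & Hj) & H1 & H2). destruct (Hj x y) as [s Hsup].
  pose proof Hm as Hm'; mdestr Hm'. unfold Mset in Hz.
  destruct (seg_point _ _ _ _ _ (rho x z) HS) as (w & Hw & Ew).
  { pose proof (Hp x z). pose proof (Hp z y). lra. }
  pose proof (seg_between _ _ _ _ _ _ HS Hw).
  assert (z = w) as ->; auto.
  apply (M_eq _ rho le x y z w s); auto.
Qed.

Lemma tri (X : Type) (rho : X -> X -> R) le x y z w :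
  is_metric rho -> metric_join_semilattice rho le -> upper_semilinear le ->
  Mset rho x y w -> Mset rho x z w \/ Mset rho z y w.
Proof.
  intros Hm Hmj Husl Hw.
  pose proof Hmj as ((Hpo & Hj) & H1 & H2). destruct Hpo as (Hrefl & Hanti & Htr).
  destruct (Hj x y) as [s Hs]. destruct (Hj x z) as [p Hp]. destruct (Hj z y) as [q Hq].
  pose proof (sup_l _ _ _ _ Hp) as H. pose proof (sup_r _ _ _ _ Hp) as H0.
  pose proof (sup_l _ _ _ _ Hq) as H1'. pose proof (sup_r _ _ _ _ Hq) as H2'.
  destruct (Mchain _ _ _ _ _ _ _ Hm Hmj Husl Hs Hw) as [[Hxw|Hyw] Hws].
  - destruct (Husl x w p Hxw H) as [Hwp|Hpw].
    + left. apply (chainM _ _ le x z w p); auto.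
    + assert (Hzw : le z w) by eauto.
      destruct (Husl z w q Hzw H1') as [Hwq|Hqw].
      * right. apply (chainM _ _ le z y w q); auto.
      * destruct (Husl z p q H0 H1') as [Hpq|Hqp].
        -- right. apply (chainM _ _ le z y w q); auto.
           assert (le s q) by (apply (sup_least _ _ _ _ _ Hs); eauto). eauto.
        -- left. apply (chainM _ _ le x z w p); auto.
           assert (le s p) by (apply (sup_least _ _ _ _ _ Hs); eauto). eauto.
  - destruct (Husl y w q Hyw H2') as [Hwq|Hqw].
    + right. apply (chainM' _ _ le z y w q); auto.
    + assert (Hzw : le z w) by eauto.
      destruct (Husl z w p Hzw H0) as [Hwp|Hpw].
      * left. apply (chainM' _ _ le x z w p); auto.
      * destruct (Husl z p q H0 H1') as [Hpq|Hqp].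
        -- right. apply (chainM' _ _ le z y w q); auto.
           assert (le s q) by (apply (sup_least _ _ _ _ _ Hs); eauto). eauto.
        -- left. apply (chainM' _ _ le x z w p); auto.
           assert (le s p) by (apply (sup_least _ _ _ _ _ Hs); eauto). eauto.
Qed.

Lemma part2 (X : Type) (rho : X -> X -> R) :
  is_metric rho -> geodesic rho ->
  (exists le : X -> X -> Prop, metric_join_semilattice rho le /\ upper_semilinear le) ->
  R_tree rho.
Proof.
  intros Hm Hg (le & Hmj & Husl). split; [auto|split].
  - intros x y S1 S2 HS1 HS2 z; split; intro Hz.
    + apply (M_seg _ rho le x y z S2); auto. apply (seg_between _ _ _ _ _ _ HS1 Hz).
    + apply (M_seg _ rho le x y z S1); auto. apply (seg_between _ _ _ _ _ _ HS2 Hz).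
  - intros x y z Sxy Sxz Szy H1 H2 H3 w Hw.
    destruct (tri _ rho le x y z w) as [E|E]; auto.
    + apply (seg_between _ _ _ _ _ _ H1 Hw).
    + left. apply (M_seg _ rho le x z w Sxz); auto.
    + right. apply (M_seg _ rho le z y w Szy); auto.
Qed.

Definition Bo {X : Type} (rho : X -> X -> R) (o x y : X) : Prop :=
  rho x y + rho y o = rho x o.

Lemma B_refl (X : Type) (rho : X -> X -> R) o x : is_metric rho -> Bo rho o x x.
Proof. intros Hm. unfold Bo. rewrite (rhoxx _ _ x Hm). lra. Qed.

Lemma B_anti (X : Type) (rho : X -> X -> R) o x y : is_metric rho ->
  Bo rho o x y -> Bo rho o y x -> x = y.
Proof.
  intros Hm H1 H2. pose proof Hm as Hm'; mdestr Hm'. unfold Bo in *.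
  pose proof (Hs x y). pose proof (Hp x y). apply (rho0 _ rho); auto; lra.
Qed.

Lemma B_trans (X : Type) (rho : X -> X -> R) o x y z : is_metric rho ->
  Bo rho o x y -> Bo rho o y z -> Bo rho o x z.
Proof.
  intros Hm H1 H2. pose proof Hm as Hm'; mdestr Hm'. unfold Bo in *.
  pose proof (Ht x y z). pose proof (Ht x z o). lra.
Qed.

Lemma B_root (X : Type) (rho : X -> X -> R) o x : is_metric rho -> Bo rho o x o.
Proof. intros Hm. unfold Bo. rewrite (rhoxx _ _ o Hm). lra. Qed.

Lemma B_between (X : Type) (rho : X -> X -> R) o x y z : is_metric rho ->
  Bo rho o x z -> Bo rho o z y -> rho x z + rho z y = rho x y.
Proof.
  intros Hm H1 H2. pose proof (B_trans _ _ _ _ _ _ Hm H1 H2). unfold Bo in *. lra.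
Qed.

Lemma le_iff_B (X : Type) (rho : X -> X -> R) le o x y :
  is_metric rho -> usl_mjs_rooted rho le o -> (le x y <-> Bo rho o x y).
Proof.
  intros Hm (((Hpo & Hj) & H1 & H2) & Husl & Hroot).
  pose proof Hm as Hm'; mdestr Hm'. unfold Bo. split.
  - intros Hxy. apply H1; auto.
  - intros HB. destruct (Hj x y) as [s Hsup].
    pose proof (sup_l _ _ _ _ Hsup). pose proof (sup_r _ _ _ _ Hsup).
    pose proof (H2 _ _ _ Hsup). pose proof (H1 y o s H0 (Hroot s)).
    pose proof (H1 x o s H (Hroot s)). pose proof (Hs s y). pose proof (Hp s y).
    assert (E0 : rho s y = 0) by lra. apply (rho0 _ rho) in E0; auto. subst; auto.
Qed.

Lemma tree_usl (X : Type) (rho : X -> X -> R) o :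
  is_metric rho -> R_tree rho -> upper_semilinear (Bo rho o).
Proof.
  intros Hm (Hg & Hu & Htri) x y z Hxy Hxz.
  pose proof Hm as Hm'; mdestr Hm'.
  destruct (Hg x o) as [S HS].
  assert (Honseg : forall y, Bo rho o x y -> S y).
  { intros y0 Hy0. unfold Bo in Hy0.
    destruct (seg_point _ _ _ _ _ (rho x y0) HS) as (w & Hw & Ew).
    { pose proof (Hp x y0). pose proof (Hp y0 o). lra. }
    destruct (Hg x y0) as [Sxy Hxy0]. destruct (Hg y0 o) as [Syo Hyo].
    destruct (Htri x o y0 S Sxy Syo HS Hxy0 Hyo w Hw) as [Hw1|Hw1].
    - replace y0 with w; auto.
      pose proof (seg_between _ _ _ _ _ _ Hxy0 Hw1). pose proof (Hp w y0).
      apply (rho0 _ rho); auto; lra.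
    - replace y0 with w; auto.
      pose proof (seg_between _ _ _ _ _ _ Hyo Hw1).
      pose proof (seg_between _ _ _ _ _ _ HS Hw). pose proof (Hp y0 w).
      symmetry. apply (rho0 _ rho); auto; lra. }
  pose proof (Honseg y Hxy) as Sy. pose proof (Honseg z Hxz) as Sz.
  destruct HS as (a & b & g & Hab & Hiso & Ha & Hb & HSe).
  apply HSe in Sy. apply HSe in Sz.
  destruct Sy as (ty & Hty & <-). destruct Sz as (tz & Htz & <-). subst.
  unfold Bo. destruct (Rle_dec ty tz).
  - left. rewrite !Hiso by lra. rewrite !rabs_ord by lra. lra.
  - right. rewrite !Hiso by lra. rewrite !rabs_ord by lra. lra.
Qed.

Lemma center (X : Type) (rho : X -> X -> R) o x y :
  is_metric rho -> R_tree rho ->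
  exists c, Bo rho o x c /\ Bo rho o y c /\ rho x c + rho c y = rho x y.
Proof.
  intros Hm (Hg & Hu & Htri). pose proof Hm as Hm'; mdestr Hm'.
  destruct (Hg x o) as [S HS].
  set (d := (rho x y + rho x o - rho y o) / 2).
  destruct (seg_point _ _ _ _ _ d HS) as (c & Hc & Ec).
  { pose proof (Ht y x o). pose proof (Ht x o y). pose proof (Hs x y).
    pose proof (Hs o y). unfold d. lra. }
  exists c. pose proof (seg_between _ _ _ _ _ _ HS Hc).
  destruct (Hg x y) as [Sxy Hxy]. destruct (Hg y o) as [Syo Hyo].
  destruct (Htri x o y S Sxy Syo HS Hxy Hyo c Hc) as [H1|H1].
  - pose proof (seg_between _ _ _ _ _ _ Hxy H1). unfold Bo, d in *.
    pose proof (Hs y c). lra.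
  - pose proof (seg_between _ _ _ _ _ _ Hyo H1). unfold Bo, d in *.
    pose proof (Hs y c). lra.
Qed.

Lemma tree_sup (X : Type) (rho : X -> X -> R) o x y :
  is_metric rho -> R_tree rho ->
  exists c, is_sup (Bo rho o) (pair_set x y) c /\ rho x c + rho c y = rho x y.
Proof.
  intros Hm Htree. destruct (center _ rho o x y Hm Htree) as (c & Hxc & Hyc & Hc).
  exists c. split; auto. split.
  - intros a [-> | ->]; auto.
  - intros u Hu. assert (Hxu := Hu x (or_introl eq_refl)).
    assert (Hyu := Hu y (or_intror eq_refl)).
    destruct (tree_usl _ rho o Hm Htree x c u Hxc Hxu) as [|Huc]; auto.
    pose proof (B_between _ _ _ _ _ _ Hm Hxu Huc).
    pose proof (B_between _ _ _ _ _ _ Hm Hyu Huc).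
    pose proof Hm as Hm'; mdestr Hm'.
    pose proof (Ht x u y). pose proof (Hs y u). pose proof (Hs c y). pose proof (Hp u c).
    assert (E0 : rho u c = 0) by lra. apply (rho0 _ rho) in E0; auto. subst.
    apply B_refl; auto.
Qed.

Lemma sup_unique {X} (le : X -> X -> Prop) A s1 s2 :
  (forall x y, le x y -> le y x -> x = y) -> is_sup le A s1 -> is_sup le A s2 -> s1 = s2.
Proof.
  intros Ha [H1 L1] [H2 L2]. apply Ha; [apply L1 | apply L2]; auto.
Qed.

Lemma tree_order (X : Type) (rho : X -> X -> R) o :
  is_metric rho -> R_tree rho -> usl_mjs_rooted rho (Bo rho o) o.
Proof.
  intros Hm Htree.
  assert (Hanti : forall x y, Bo rho o x y -> Bo rho o y x -> x = y)
    by (intros; eapply B_anti; eauto).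
  split; [split; [split|split] | split].
  - split; [|split]; intros.
    + apply B_refl; auto.
    + eapply B_anti; eauto.
    + eapply B_trans; eauto.
  - intros x y. destruct (tree_sup _ rho o x y Hm Htree) as (c & Hc & _). eauto.
  - intros. eapply B_between; eauto.
  - intros x y s Hs. destruct (tree_sup _ rho o x y Hm Htree) as (c & Hc & E).
    rewrite (sup_unique _ _ _ _ Hanti Hs Hc). lra.
  - apply tree_usl; auto.
  - intros x. apply B_root; auto.
Qed.

Lemma sup_set (X : Type) (rho : X -> X -> R) o le :
  is_metric rho -> geodesic rho -> usl_mjs_rooted rho le o ->
  forall A : X -> Prop, (exists a, A a) -> exists s, is_sup le A s.
Proof.
  intros Hm Hg Hle A [a0 Ha0].
  assert (HB : forall x y, le x y <-> Bo rho o x y) by (intros; eapply le_iff_B; eauto).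
  pose proof Hle as (_ & Husl & Hroot).
  pose proof Hm as Hm'; mdestr Hm'.
  destruct (Hg a0 o) as [S (a & b & g & Hab & Hiso & Ha & Hb & _)].
  set (E := fun t => a <= t <= b /\ forall a', A a' -> le a' (g t)).
  set (L := fun t => a <= t /\ forall t', E t' -> t <= t').
  assert (Eb : E b). { split; [lra|]. intros. rewrite Hb. apply Hroot. }
  destruct (completeness L) as [m [Hub Hlub]].
  { exists b. intros t [_ Htt]. apply Htt, Eb. }
  { exists a. split; [lra|]. intros t' [Ht' _]; lra. }
  assert (Ham : a <= m) by (apply Hub; split; [lra|]; intros t' [Ht' _]; lra).
  assert (Hmb : m <= b) by (apply Hlub; intros t [_ Htt]; apply Htt, Eb).
  assert (HmE : forall t', E t' -> m <= t').
  { intros t' Ht'. apply Hlub. intros t [_ Htt]. apply Htt, Ht'. }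
  assert (Happ : forall e, 0 < e -> exists t', E t' /\ t' < m + e).
  { intros e He. destruct (classic (exists t', E t' /\ t' < m + e)) as [|Hn]; auto.
    exfalso. assert (L (m + e)).
    { split; [lra|]. intros t' Ht'. destruct (Rlt_le_dec t' (m + e)); auto.
      exfalso; apply Hn; eauto. }
    pose proof (Hub _ H). lra. }
  exists (g m). split.
  - intros a' Ha'. apply HB. unfold Bo.
    set (G := rho a' (g m) + rho (g m) o - rho a' o).
    assert (G0 : 0 <= G) by (pose proof (Ht a' (g m) o); unfold G; lra).
    assert (Gs : forall e, 0 < e -> G < 2 * e).
    { intros e He. destruct (Happ e He) as (t' & [Ht' Hub'] & Hlt).
      pose proof (HmE t' (conj Ht' Hub')) as Hmt.
      pose proof (proj1 (HB _ _) (Hub' a' Ha')) as HBt. unfold Bo in HBt.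
      assert (rho (g m) (g t') = t' - m) by (rewrite Hiso, rabs_ord; lra).
      pose proof (Ht a' (g t') (g m)). pose proof (Ht (g m) (g t') o).
      pose proof (Hs (g t') (g m)). unfold G. lra. }
    destruct (Req_dec G 0) as [HG|HG]; [unfold G in HG; lra|].
    pose proof (Gs (G / 2) ltac:(lra)). lra.
  - intros u Hu. pose proof (proj1 (HB _ _) (Hu a0 Ha0)) as Ha0u. unfold Bo in Ha0u.
    assert (Hao : rho a0 o = b - a) by (subst; rewrite Hiso, rabs_ord; lra).
    destruct (ex_intro (fun t => t = a + rho a0 u) _ eq_refl) as [t Htdef].
    assert (Ht0 : a <= t <= b) by (pose proof (Hp a0 u); pose proof (Hp u o); lra).
    assert (Haw : rho a0 (g t) = rho a0 u) by (subst; rewrite Hiso, rabs_ord; lra).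
    assert (Hwo : rho (g t) o = b - t) by (subst; rewrite Hiso, rabs_ord; lra).
    assert (Hlew : le a0 (g t)) by (apply HB; unfold Bo; lra).
    assert (Hug : u = g t).
    { destruct (Husl a0 u (g t) (Hu a0 Ha0) Hlew) as [Hc|Hc];
      apply HB in Hc; unfold Bo in Hc.
      - apply (rho0 _ rho); auto; lra.
      - pose proof (Hs (g t) u). apply (rho0 _ rho); auto; lra. }
    assert (Et : E t) by (split; auto; intros a' Ha'; rewrite <- Hug; auto).
    pose proof (HmE t Et). rewrite Hug. apply HB. unfold Bo. subst o.
    rewrite !Hiso by lra. rewrite !rabs_ord by lra. lra.
Qed.

Theorem theorem1 (X : Type) (rho : X -> X -> R) :
  is_metric rho -> geodesic rho ->
  (R_tree rho ->
     forall o : X,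
       (exists le : X -> X -> Prop,
          usl_mjs_rooted rho le o /\
          (forall le' : X -> X -> Prop, usl_mjs_rooted rho le' o ->
             forall x y, le' x y <-> le x y)) /\
       (forall le : X -> X -> Prop, usl_mjs_rooted rho le o ->
          forall A : X -> Prop, (exists a, A a) -> exists s, is_sup le A s))
  /\
  ((exists le : X -> X -> Prop,
      metric_join_semilattice rho le /\ upper_semilinear le) ->
   R_tree rho).
Proof.
  intros Hm Hg. split.
  - intros Htree o. split.
    + exists (Bo rho o). split.
      * apply tree_order; auto.
      * intros le' Hle' x y. eapply le_iff_B; eauto.
    + intros le Hle. eapply sup_set; eauto.
  - apply part2; auto.
Qed.
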